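(* Let $M$ be a globally hyperbolic developable conformally flat spacetime of dimension $n\ge3$ with developing map $D:M\to\widetilde{Ein}_{1,n-1}$. Then for every $p\in M$, $$I^-\big(D(I^-(p))\big)=I^-(D(p)),$$ where the left-hand side is the chronological past in $\widetilde{Ein}_{1,n-1}$ of the set $D(I^-(p))$.
   Context: $\widetilde{Ein}_{1,n-1}$ denotes the universal cover of the Einstein universe, conformally identified with $\mathbb{S}^{n-1}\times\mathbb{R}$ with the conformal class of $d\sigma^2-dt^2$, time-oriented by $\partial_t$. A conformally flat spacetime $M$ is developable if it admits a developing map: a conformal, time-orientation preserving local diffeomorphism $D:M\to\widetilde{Ein}_{1,n-1}$. *)

(* Defs.v *)
From HB Require Import structures.
From mathcomp Require Import all_boot all_order all_algebra.
From mathcomp Require Import all_classical all_reals all_analysis.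
Set Implicit Arguments. Unset Strict Implicit. Unset Printing Implicit Defensive.
Import Order.TTheory GRing.Theory Num.Theory.
Import numFieldNormedType.Exports.
Local Open Scope classical_set_scope.
Local Open Scope ring_scope.

(* Ambient space R^n x R containing the cylinder S^{n-1} x R = universal
   cover of the Einstein universe Ein_{1,n-1}. *)
Definition Pt (R : realType) (n : nat) := ('rV[R]_n * R)%type.

(* Euclidean squared norm on R^n (the round metric on S^{n-1} is the
   restriction of the Euclidean metric). *)
Definition sqn (R : realType) (n : nat) (v : 'rV[R]_n) : R :=
  \sum_(i < n) v ord0 i ^+ 2.

Definition cyl (R : realType) (n : nat) : set (Pt R n) :=
  [set z | sqn z.1 = 1].

(* tangent vector (v, tau) of Ein~ at a point, with metric dsigma^2 - dt^2,
   time-oriented by d/dt *)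
Definition fut_timelike (R : realType) (n : nat) (v : 'rV[R]_n) (tau : R) :=
  sqn v < tau ^+ 2 /\ 0 < tau.
Definition fut_causal (R : realType) (n : nat) (v : 'rV[R]_n) (tau : R) :=
  sqn v <= tau ^+ 2 /\ 0 < tau.

(* A curve c : [0,1] -> X (X a space mapped to Ein~ by D) whose image under D
   is piecewise C^1 with all (one-sided) velocities satisfying P.
   Each piece is the restriction to [a_i, a_(i+1)] of a C^1 map R -> R^n x R. *)
Definition pw_curve (R : realType) (n : nat) (X : topologicalType)
    (D : X -> Pt R n) (P : 'rV[R]_n -> R -> Prop) (c : R -> X) : Prop :=
  {within `[0, 1], continuous c} /\
  exists (k : nat) (a : nat -> R),
    [/\ a 0%N = 0, a k = 1,
        (forall i, (i < k)%N -> a i < a i.+1) &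
        forall i, (i < k)%N ->
          exists (g : R -> 'rV[R]_n) (h : R -> R),
            [/\ forall s, derivable g s 1,
                forall s, derivable h s 1,
                continuous (derive1 g),
                continuous (derive1 h) &
                forall s, a i <= s <= a i.+1 ->
                  D (c s) = (g s, h s) /\ P (derive1 g s) (derive1 h s)]].

Definition chron (R : realType) (n : nat) (X : topologicalType)
    (D : X -> Pt R n) (p q : X) : Prop :=
  exists c, pw_curve D (@fut_timelike R n) c /\ c 0 = p /\ c 1 = q.

Definition causal_rel (R : realType) (n : nat) (X : topologicalType)
    (D : X -> Pt R n) (p q : X) : Prop :=
  p = q \/ exists c, pw_curve D (@fut_causal R n) c /\ c 0 = p /\ c 1 = q.

Definition Iminus (R : realType) (n : nat) (M : topologicalType)
    (D : M -> Pt R n) (p : M) : set M := [set q | chron D q p].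

Definition Ein_Iminus (R : realType) (n : nat) (A : set (Pt R n)) : set (Pt R n) :=
  [set z | cyl z /\ exists w, A w /\
     exists c : R -> Pt R n,
       [/\ pw_curve id (@fut_timelike R n) c,
           (forall s, 0 <= s <= 1 -> cyl (c s)), c 0 = z & c 1 = w]].

(* D is a local homeomorphism of M onto open subsets of the cylinder; then
   M carries the pulled-back smooth conformally flat Lorentzian structure,
   time-oriented by the pull-back of d/dt, and D is a conformal,
   time-orientation preserving local diffeomorphism. *)
Definition developing_map (R : realType) (n : nat) (M : topologicalType)
    (D : M -> Pt R n) : Prop :=
  continuous D /\ (forall p, cyl (D p)) /\
  forall p, exists (U : set M) (W : set (Pt R n)) (E : Pt R n -> M),
    [/\ open U /\ U p, open W,
        (forall x, U x -> W (D x) /\ E (D x) = x),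
        (forall z, W z -> cyl z -> U (E z) /\ D (E z) = z) &
        {within W `&` cyl (n:=n), continuous E}].

Definition dev_spacetime (R : realType) (n : nat) (M : topologicalType)
    (D : M -> Pt R n) : Prop :=
  [/\ hausdorff_space M, @second_countable M, connected [set: M] &
      developing_map D].

Definition glob_hyperbolic (R : realType) (n : nat) (M : topologicalType)
    (D : M -> Pt R n) : Prop :=
  (forall p, ~ exists c, pw_curve D (@fut_causal R n) c /\ c 0 = p /\ c 1 = p) /\
  (forall p q : M, compact ([set x | causal_rel D p x] `&` [set x | causal_rel D x q])).

(* Main.v *)
Require Import Defs.
From HB Require Import structures.
From mathcomp Require Import all_boot all_order all_algebra.
From mathcomp Require Import all_classical all_reals all_analysis.
From mathcomp Require Import lra zify.
Set Implicit Arguments. Unset Strict Implicit. Unset Printing Implicit Defensive.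
Import Order.TTheory GRing.Theory Num.Theory.
Import numFieldNormedType.Exports.
Local Open Scope classical_set_scope.
Local Open Scope ring_scope.

Lemma within_comp (T S U : topologicalType) (A : set T) (B : set S)
  (phi : T -> S) (c : S -> U) :
  {within A, continuous phi} -> (forall x, A x -> B (phi x)) ->
  {within B, continuous c} -> {within A, continuous (c \o phi)}.
Proof.
move=> /subspace_continuousP cphi AB /subspace_continuousP cc.
apply/subspace_continuousP => x Ax Q /= hQ.
have := cc _ (AB _ Ax) _ hQ.
rewrite !nbhs_filterE /fmap /within /= => hnear.
have := cphi _ Ax _ hnear.
rewrite !nbhs_filterE /fmap /within /= => h.
apply: filterS h => y hy Ay; exact: hy Ay (AB _ Ay).
Qed.

Section Der.
Variable R : realType.
Lemma chain1 (V : normedModType R) (f : R -> R) (g : R -> V) x :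
  derivable f x 1 -> derivable g (f x) 1 ->
  derive1 (g \o f) x = derive1 f x *: derive1 g (f x).
Proof.
move=> /derivable1_diffP df /derivable1_diffP dg.
rewrite derive1E'; last exact/differentiable_comp.
rewrite diff_comp // /= -derive1E' // diff1E //.
Qed.

Lemma aff_derivable (al be x : R) : derivable (fun s : R => al + be * s) x 1.
Proof.
apply: derivableD; first exact: derivable_cst.
apply: derivableM; [exact: derivable_cst | exact: derivable_id].
Qed.

Lemma aff_derive (al be x : R) : derive1 (fun s : R => al + be * s) x = be.
Proof.
rewrite derive1E deriveD; last 2 first.
  exact: derivable_cst.
  apply: derivableM; [exact: derivable_cst | exact: derivable_id].
rewrite derive_cst add0r deriveM; last 2 first.
  exact: derivable_cst. exact: derivable_id.
by rewrite derive_cst derive_id /= scaler0 addr0 [_%:A]mulr1.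
Qed.

Lemma aff_cont (al be : R) : continuous (fun s : R => al + be * s).
Proof.
move=> x; apply: differentiable_continuous; apply/derivable1_diffP.
exact: aff_derivable.
Qed.

Lemma piece_aff (V : normedModType R) (g : R -> V) (al be : R) :
  (forall s, derivable g s 1) -> continuous (derive1 g) ->
  [/\ forall s, derivable (fun s => g (al + be * s)) s 1,
      continuous (derive1 (fun s => g (al + be * s))) &
      forall s, derive1 (fun s => g (al + be * s)) s = be *: derive1 g (al + be * s)].
Proof.
move=> dg cg.
have de : forall s, derive1 (fun s => g (al + be * s)) s = be *: derive1 g (al + be * s).
  move=> s; have := chain1 (@aff_derivable al be s) (dg (al + be * s)).
  by rewrite aff_derive.
split => //.
- move=> s; apply/derivable1_diffP; apply: differentiable_comp.
    by apply/derivable1_diffP; exact: aff_derivable.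
  by apply/derivable1_diffP; exact: dg.
- rewrite (funext de) => x.
apply: (@continuousZ _ _ _ (fun=> be) (fun s => g^`()%classic (al + be * s))); first exact: cst_continuous.
  apply: continuous_comp; [exact: aff_cont | exact: cg].
Qed.

Lemma sqnZ n (t : R) (v : 'rV[R]_n) : sqn (t *: v) = t ^+ 2 * sqn v.
Proof. by rewrite /sqn mulr_sumr; apply: eq_bigr => i _; rewrite mxE exprMn. Qed.

Lemma timelikeZ n (t : R) (v : 'rV[R]_n) tau : 0 < t ->
  fut_timelike v tau -> fut_timelike (t *: v) (t * tau).
Proof.
move=> t0 [h1 h2]; split; last exact: mulr_gt0.
by rewrite sqnZ exprMn ltr_pM2l // exprn_gt0.
Qed.

Lemma within_eq (T U : topologicalType) (A : set T) (f g : T -> U) :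
  {within A, continuous f} -> (forall x, A x -> f x = g x) ->
  {within A, continuous g}.
Proof.
move=> /subspace_continuousP cf fg; apply/subspace_continuousP => x Ax.
have hw : Filter [set P | {near nbhs x, A `<=` P}] := within_filter _ _.
rewrite /from_subspace -(fg _ Ax).
apply: cvg_trans (cf _ Ax); apply: (@near_eq_cvg _ _ _ (within_filter _ _)).
rewrite near_withinE; apply: nearW => y Ay; exact: fg.
Qed.

Lemma incr_le (a : nat -> R) k : (forall i, (i < k)%N -> a i < a i.+1) ->
  forall i j, (i <= j)%N -> (j <= k)%N -> a i <= a j.
Proof.
move=> inc i; elim=> [|j IH]; first by rewrite leqn0 => /eqP ->.
rewrite leq_eqVlt => /orP[/eqP -> //| ij] jk.
apply: le_trans (IH ij (ltnW jk)) _; exact/ltW/inc.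
Qed.

Lemma init_restrict n (c : R -> Pt R n) :
  pw_curve id (@fut_timelike R n) c -> exists s1, 0 <= s1 < 1 /\
  (forall s0, s1 <= s0 -> s0 < 1 -> exists (g : R -> 'rV[R]_n) (h : R -> R),
     [/\ forall s, derivable g s 1, forall s, derivable h s 1,
         continuous (derive1 g), continuous (derive1 h) &
         forall s, s0 <= s <= 1 -> c s = (g s, h s) /\
            fut_timelike (derive1 g s) (derive1 h s)]) /\
  (forall s0, s1 < s0 -> s0 < 1 -> pw_curve id (@fut_timelike R n) (fun s => c (0 + s0 * s))).
Proof.
move=> [cc [k [a [a0 ak ainc hp]]]].
case: k ak ainc hp => [|k] ak ainc hp; first by move: ak; rewrite a0 => /eqP; rewrite eq_sym oner_eq0.
have ale := incr_le ainc.
have a_ge0 : 0 <= a k by rewrite -a0; apply: ale.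
have a_lt1 : a k < 1 by rewrite -ak; apply: ainc.
exists (a k); split; first by rewrite a_ge0 a_lt1.
have [g [h [dg dh cg ch hgh]]] := hp k (ltnSn k).
split.
  move=> s0 s10 s01; exists g, h; split => // s /andP[s0s s1]; apply: hgh.
  by rewrite ak s1 andbT; apply: le_trans s0s.
move=> s0 s10 s01.
have s0p : 0 < s0 by apply: le_lt_trans s10.
split.
  apply: (@within_comp R R _ `[0, 1]%classic `[0, 1]%classic (fun s : R => 0 + s0 * s) c).
  - exact/continuous_subspaceT/aff_cont.
  - move=> x /=; rewrite !in_itv /= => /andP[x0 x1]; rewrite add0r.
    rewrite mulr_ge0 //=; last exact: ltW.
    by rewrite -[1]mulr1 ler_pM // ltW.
  - exact: cc.
exists k.+1, (fun i => if (i <= k)%N then a i / s0 else 1); split.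
- by rewrite /= a0 mul0r.
- by rewrite ltnn.
- move=> i; rewrite ltnS => ik; rewrite ik.
  case: (ltnP i k) => ik'.
    by rewrite ltr_pM2r ?invr_gt0 //; apply: ainc; apply: ltn_trans ik' _.
  have -> : i = k by apply/eqP; rewrite eqn_leq ik ik'.
  by rewrite ltr_pdivrMr // mul1r.
- move=> i; rewrite ltnS => ik.
  have [gi [hi [dgi dhi cgi chi hghi]]] := hp i ik.
  have [dg' cg' eg] := @piece_aff _ gi 0 s0 dgi cgi.
  have [dh' ch' eh] := @piece_aff _ hi 0 s0 dhi chi.
  exists (fun s => gi (0 + s0 * s)), (fun s => hi (0 + s0 * s)); split; [exact: dg' | exact: dh' | exact: cg' | exact: ch' | ].
  move=> s; rewrite ik => /andP[ls us].
  have [lb ub] : a i <= 0 + s0 * s /\ 0 + s0 * s <= a i.+1.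
    rewrite add0r; split; first by rewrite mulrC -ler_pdivrMr.
    move: us; case: (ltnP i k) => ik'.
      by move=> us'; rewrite mulrC -ler_pdivlMr.
    have ei : i = k by apply/eqP; rewrite eqn_leq ik ik'.
    rewrite ei ak => us.
    have sge0 : 0 <= s.
      apply: le_trans ls; apply: divr_ge0; last exact: ltW.
      by rewrite -a0; apply: ale => //; rewrite ltnW // ltnS.
    rewrite -[1]mulr1; apply: ler_pM => //; exact: ltW.
  have hb : a i <= 0 + s0 * s <= a i.+1 by rewrite lb ub.
  have [-> tl] := hghi _ hb.
  split => //; rewrite eg eh.
  exact: (timelikeZ s0p tl).
Qed.

Lemma concat n (c1 c2 : R -> Pt R n) :
  pw_curve id (@fut_timelike R n) c1 -> pw_curve id (@fut_timelike R n) c2 ->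
  c1 1 = c2 0 ->
  pw_curve id (@fut_timelike R n)
    (fun s => if s <= 2^-1 then c1 (0 + 2 * s) else c2 (-1 + 2 * s)).
Proof.
move=> [cc1 [k1 [a1 [a10 a1k ainc1 hp1]]]] [cc2 [k2 [a2 [a20 a2k ainc2 hp2]]]] e12.
have ale1 := incr_le ainc1; have ale2 := incr_le ainc2.
split.
  have -> : `[0, 1]%classic = `[0, 2^-1]%classic `|` `[2^-1, 1]%classic :> set R.
    apply/seteqP; split => x /=; rewrite !in_itv /=.
      by case/andP => h0 h1; case: (leP x 2^-1) => hx; [left|right];
        apply/andP; split => //; lra.
    by case => /andP[h0 h1]; apply/andP; split; lra.
  apply: withinU_continuous; [exact: itv_closed | exact: itv_closed | |].
  - apply: (@within_eq _ _ _ (c1 \o (fun s : R => 0 + 2 * s))).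
      apply: (@within_comp R R _ `[0, 2^-1]%classic `[0, 1]%classic (fun s : R => 0 + 2 * s) c1).
      + exact/continuous_subspaceT/aff_cont.
      + move=> x /=; rewrite !in_itv /= => /andP[x0 x1]; apply/andP; split; lra.
      + exact: cc1.
    by move=> x /=; rewrite in_itv /= => /andP[x0 x1]; rewrite x1.
  - apply: (@within_eq _ _ _ (c2 \o (fun s : R => -1 + 2 * s))).
      apply: (@within_comp R R _ `[2^-1, 1]%classic `[0, 1]%classic (fun s : R => -1 + 2 * s) c2).
      + exact/continuous_subspaceT/aff_cont.
      + move=> x /=; rewrite !in_itv /= => /andP[x0 x1]; apply/andP; split; lra.
      + exact: cc2.
    move=> x /=; rewrite in_itv /= => /andP[x0 x1]; case: ifP => // hx.
    have -> : 0 + 2 * x = 1 by lra.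
    have -> : -1 + 2 * x = 0 by lra.
    by [].
have k2p : (0 < k2)%N.
  by case: k2 a2k {ainc2 hp2 ale2} => // /eqP; rewrite a20 eq_sym oner_eq0.
exists (k1 + k2)%N, (fun i => if (i <= k1)%N then a1 i / 2 else (1 + a2 (i - k1)%N) / 2).
have hb : forall i, (k1 <= i)%N ->
   (if (i <= k1)%N then a1 i / 2 else (1 + a2 (i - k1)%N) / 2) = (1 + a2 (i - k1)%N) / 2.
  move=> i ki; case: ifP => // ik.
  have ei : i = k1 by apply/eqP; rewrite eqn_leq ik ki.
  by rewrite ei subnn a20 a1k addr0.
split.
- by rewrite /= a10 mul0r.
- rewrite hb ?leq_addr // addKn a2k; lra.
- move=> i ik; case: (ltnP i k1) => ik1.
    have -> : (i <= k1)%N by apply: ltnW.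
    have := ainc1 _ ik1; lra.
  rewrite hb //.
  rewrite subSn //.
  have := ainc2 (i - k1)%N; have -> : (i - k1 < k2)%N by lia.
  move=> /(_ isT); lra.
- move=> i ik; case: (ltnP i k1) => ik1.
    have [g [h [dg dh cg ch hgh]]] := hp1 i ik1.
    have [dg' cg' eg] := @piece_aff _ g 0 2 dg cg.
    have [dh' ch' eh] := @piece_aff _ h 0 2 dh ch.
    exists (fun s => g (0 + 2 * s)), (fun s => h (0 + 2 * s)).
    split; [exact: dg' | exact: dh' | exact: cg' | exact: ch' | ].
    move=> s; have -> : (i <= k1)%N by apply: ltnW.
    move=> /andP[ls us].
    have a1le : a1 i.+1 <= 1 by rewrite -a1k; apply: ale1.
    have -> : s <= 2^-1 by lra.
    have hb' : a1 i <= 0 + 2 * s <= a1 i.+1 by apply/andP; split; lra.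
    have [-> tl] := hgh _ hb'.
    split => //; rewrite eg eh.
    exact: (timelikeZ (ltr0Sn _ 1) tl).
  have jk : (i - k1 < k2)%N by lia.
  have [g [h [dg dh cg ch hgh]]] := hp2 _ jk.
  have [dg' cg' eg] := @piece_aff _ g (-1) 2 dg cg.
  have [dh' ch' eh] := @piece_aff _ h (-1) 2 dh ch.
  exists (fun s => g (-1 + 2 * s)), (fun s => h (-1 + 2 * s)).
  split; [exact: dg' | exact: dh' | exact: cg' | exact: ch' | ].
  move=> s; rewrite hb //.
  rewrite subSn // => /andP[ls us].
  have a2ge : 0 <= a2 (i - k1)%N by rewrite -a20; apply: ale2 => //; lia.
  have hb' : a2 (i - k1)%N <= -1 + 2 * s <= a2 (i - k1).+1 by apply/andP; split; lra.
  have [e tl] := hgh _ hb'.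
  split; last by rewrite eg eh; exact: (timelikeZ (ltr0Sn _ 1) tl).
  rewrite -e /=; case: ifP => // hs.
  have -> : 0 + 2 * s = 1 by lra.
  have -> : -1 + 2 * s = 0 by lra.
  by [].
Qed.

Lemma pw_comp n (M : topologicalType) (D : M -> Pt R n) (cM : R -> M) :
  continuous D -> pw_curve D (@fut_timelike R n) cM ->
  pw_curve id (@fut_timelike R n) (D \o cM).
Proof.
move=> Dc [cc rest]; split => //.
apply: (@within_comp R M _ `[0, 1]%classic setT cM D) => //.
exact: continuous_subspaceT.
Qed.
End Der.

Unset Implicit Arguments.
Set Strict Implicit.

Theorem lemma4p2 (R : realType) (n : nat) (M : topologicalType)
    (D : M -> Pt R n) :
  (3 <= n)%N -> dev_spacetime D -> glob_hyperbolic D ->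
  forall p : M,
    Ein_Iminus (D @` Iminus D p) = Ein_Iminus [set D p].
Proof.
move=> _ [_ _ _ [Dc [Dcyl Dloc]]] _ p.
apply/seteqP; split => z [zc [w [Aw [c [pc ccyl c0 c1]]]]].
- case: Aw => q [cM [pcM [cM0 cM1]]] Dqw.
  split => //; exists (D p); split => //.
  exists (fun s => if s <= 2^-1 then c (0 + 2 * s) else (D \o cM) (-1 + 2 * s)).
  split.
  + apply: concat => //; first exact: pw_comp.
    by rewrite c1 /= cM0.
  + move=> s /andP[s0 s1]; case: ifP => hs; last exact: Dcyl.
    apply: ccyl; apply/andP; split; lra.
  + have -> : (0 : R) <= 2^-1 by lra.
    by rewrite mulr0 addr0.
  + have -> : ((1 : R) <= 2^-1) = false by apply/negbTE; rewrite -ltNge; lra.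
    have -> : -1 + 2 * 1 = (1 : R) by lra.
    by rewrite /= cM1.
- have ew : w = D p by [].
  have [U [W [E [[oU Up] oW hUW hWU cE]]]] := Dloc p.
  have [WDp EDp] := hUW _ Up.
  have [s1 [/andP[s1ge s1lt] [lastp initp]]] := init_restrict pc.
  have [cc _] := pc.
  have nW : nbhs (c 1) W by apply: open_nbhs_nbhs; split => //; rewrite c1 ew.
  have /subspace_continuousP hcv := cc.
  have h1 : (`[0, 1]%classic : set R) 1 by rewrite /= in_itv /= lexx ler01.
  have := hcv 1 h1 _ nW.
  rewrite nbhs_filterE /fmap /within /= => /nbhs_ballP[e /= e0 he].
  have [s0 [hs10 hs01 hs0e]] : exists s0 : R, [/\ s1 < s0, s0 < 1 & 1 - e < s0].
    case: (leP s1 (1 - e)) => h; [exists ((1 - e + 1) / 2) | exists ((s1 + 1) / 2)].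
      by split; lra.
    by split; lra.
  have hW : forall t, s0 <= t <= 1 -> W (c t).
    move=> t /andP[t0 t1].
    have hb : ball (1 : R) e t by rewrite -ball_normE /= ger0_norm; lra.
    apply: (he t hb); rewrite /= in_itv /=; apply/andP; split; lra.
  have hs0 : s0 <= s0 <= 1 by rewrite lexx ltW.
  have c01 : 0 <= s0 <= 1 by apply/andP; split; lra.
  have [_ Dq] := hWU _ (hW s0 hs0) (ccyl s0 c01).
  split => //; exists (D (E (c s0))); split.
  + exists (E (c s0)) => //.
    exists (fun s => E (c (s0 + (1 - s0) * s))).
    split; last split.
    * split.
        apply: (@within_comp R (Pt R n) M `[0, 1]%classic (W `&` cyl (n:=n))
                  (fun s => c (s0 + (1 - s0) * s)) E) => //.
        - apply: (@within_comp R R _ `[0, 1]%classic `[0, 1]%classic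
                     (fun s : R => s0 + (1 - s0) * s) c) => //.
            exact/continuous_subspaceT/aff_cont.
          move=> x /=; rewrite !in_itv /= => /andP[x0 x1]; apply/andP; split; nra.
        - move=> x /=; rewrite in_itv /= => /andP[x0 x1]; split.
            by apply: hW; apply/andP; split; nra.
          by apply: ccyl; apply/andP; split; nra.
      exists 1%N, (fun i => i%:R); split; [by [] | by [] | by move=> i; rewrite ltnS leqn0 => /eqP -> /=; exact: ltr01 | ].
      move=> i; rewrite ltnS leqn0 => /eqP -> .
      have [g [h [dg dh cg ch hgh]]] := lastp s0 (ltW hs10) hs01.
      have s0p : 0 < 1 - s0 by lra.
      have [dg' cg' eg] := @piece_aff _ _ g s0 (1 - s0) dg cg.
      have [dh' ch' eh] := @piece_aff _ _ h s0 (1 - s0) dh ch.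
      exists (fun s => g (s0 + (1 - s0) * s)), (fun s => h (s0 + (1 - s0) * s)).
      split; [exact: dg' | exact: dh' | exact: cg' | exact: ch' | ].
      move=> s /andP[ls us].
      have hb : s0 <= s0 + (1 - s0) * s <= 1 by apply/andP; split; rewrite /= in ls us; nra.
      have [e1 tl] := hgh _ hb.
      have c01' : 0 <= s0 + (1 - s0) * s <= 1 by apply/andP; split; rewrite /= in ls us; nra.
      have [_ ->] := hWU _ (hW _ hb) (ccyl _ c01').
      split => //; rewrite eg eh.
      exact: (timelikeZ s0p tl).
    * by rewrite mulr0 addr0.
    * have -> : s0 + (1 - s0) * 1 = 1 by lra.
      by rewrite c1 ew.
  + exists (fun s => c (0 + s0 * s)); split.
    * exact: initp.
    * move=> s /andP[x0 x1]; apply: ccyl; apply/andP; split; nra.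
    * by rewrite mulr0 addr0.
    * by rewrite mulr1 add0r Dq.
Qed.
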